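(* Let $n\ge1$ and $|\psi\rangle=\sum_{k=0}^n d_k|D^n_k\rangle$ with $d_k\in\mathbb{C}$ and $d_0\neq0$. For $y\in\mathbb{C}$ and $x_1,\dots,x_n\in\mathbb{C}$ let $A_0=y\,\mathbb{1}_n$ and $A_1=\mathrm{diag}(x_1,\dots,x_n)$. Then $|\psi\rangle=\sum_{(i_1,\dots,i_n)\in\{0,1\}^n}\mathrm{Tr}[A_{i_1}\cdots A_{i_n}]\,|i_1\cdots i_n\rangle$ if and only if $y^n=d_0/n$ and $x_1^k+\cdots+x_n^k=\dfrac{d_k}{y^{n-k}\sqrt{\binom nk}}$ for all $k=1,\dots,n$ (in particular $x_1^n+\cdots+x_n^n=d_n$). Consequently, for any $y$ with $y^n=d_0/n$, the corresponding $x_1,\dots,x_n$ are exactly (up to permutation) the roots, with multiplicity, of $P(X)=\sum_{m=0}^n\frac{n!}{m!}Q_m(\boldsymbol z)X^{n-m}$ with $z_k=\dfrac{d_k}{y^{n-k}\sqrt{\binom nk}}$.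
   Context: $|D^n_k\rangle=\binom nk^{-1/2}\sum_{\vec i\in\{0,1\}^n,\ \sum_j i_j=k}|\vec i\rangle$ is the normalized $n$-qubit Dicke state with $k$ excitations, and $|i_1\cdots i_n\rangle$ is the computational basis. For $m\ge1$, a partition $\boldsymbol\lambda\vdash m$ is written $(\lambda_1^{\mu_1},\dots,\lambda_k^{\mu_k})$ with distinct parts $\lambda_1>\cdots>\lambda_k\ge1$ of multiplicities $\mu_i\ge1$, $\sum\mu_i\lambda_i=m$; $Q_m(\boldsymbol z)=\sum_{\boldsymbol\lambda\vdash m}\xi_{\boldsymbol\lambda}\prod_{i=1}^kz_{\lambda_i}^{\mu_i}$ with $\xi_{\boldsymbol\lambda}=m!\prod_{i=1}^k\frac{(-1)^{\mu_i}}{\mu_i!\lambda_i^{\mu_i}}$, and $Q_0:=1$. *)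

(* Defs.v *)
(* Complex scalars: any numClosedFieldType C (e.g. complex R). *)
From HB Require Import structures.
From mathcomp Require Import all_boot all_order all_algebra.
Set Implicit Arguments. Unset Strict Implicit. Unset Printing Implicit Defensive.
Import Order.TTheory GRing.Theory Num.Theory.
Local Open Scope ring_scope.

(* computational basis labels |i_1 ... i_n>, i_l in {0,1} (false = 0, true = 1) *)
Definition bits (n : nat) := {ffun 'I_n -> bool}.

Definition weight n (i : bits n) : nat := #|[set l | i l]|.

Definition dicke (C : numClosedFieldType) (n k : nat) (i : bits n) : C :=
  if weight i == k then (sqrtC ('C(n, k))%:R)^-1 else 0.

Definition dicke_sum (C : numClosedFieldType) (n : nat) (d : nat -> C) (i : bits n) : C :=
  \sum_(k < n.+1) d k * @dicke C n k i.

Definition mps_coef (C : numClosedFieldType) (n D : nat) (A : bool -> 'M[C]_D)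
  (i : bits n) : C :=
  \tr (foldr (@mulmx C D D D) 1%:M [seq A (i l) | l <- enum 'I_n]).

Definition Amat (C : numClosedFieldType) (n : nat) (y : C) (x : 'I_n -> C)
  (b : bool) : 'M[C]_n :=
  if b then diag_mx (\row_j x j) else y%:M.

(* A partition of m is encoded by its multiplicity function mu : 'I_m -> 'I_m.+1,
   mu i = multiplicity of the part (i+1), subject to sum_i (i+1) mu_i = m.
   Parts with multiplicity 0 contribute the factor 1. For m = 0 this gives 1. *)
Definition Qm (C : numClosedFieldType) (m : nat) (z : nat -> C) : C :=
  \sum_(mu : {ffun 'I_m -> 'I_m.+1} | (\sum_(i < m) i.+1 * mu i)%N == m)
     (m`!%:R * \prod_(i < m)
        ((-1) ^+ (mu i) / ((mu i)`!%:R * (i.+1)%:R ^+ (mu i)) * z i.+1 ^+ (mu i))).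

Definition zcoef (C : numClosedFieldType) (n : nat) (d : nat -> C) (y : C) (k : nat) : C :=
  d k / (y ^+ (n - k) * sqrtC ('C(n, k))%:R).

Definition Ppoly (C : numClosedFieldType) (n : nat) (z : nat -> C) : {poly C} :=
  \sum_(m < n.+1) ((n`!%:R / m`!%:R) * Qm m z) *: 'X^(n - m).

(* Main.v *)
Require Import Defs.
From HB Require Import structures.
From mathcomp Require Import all_boot all_order all_algebra.
From mathcomp Require Import ring zify.
Import Order.TTheory GRing.Theory Num.Theory.
Local Open Scope ring_scope.
Set Implicit Arguments. Unset Strict Implicit.

Section PS.
Variable C : numClosedFieldType.
Implicit Types p q r H S : {poly C}.

Definition cong (N : nat) p q := exists r, p - q = r * 'X^N.

Lemma cong_coef N p q i : cong N p q -> (i < N)%N -> p`_i = q`_i.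
Proof.
move=> [r e] hi; apply/eqP; rewrite -subr_eq0 -coefB e coefMXn hi //.
Qed.

Lemma cong_weaken M N p q : (M <= N)%N -> cong N p q -> cong M p q.
Proof.
move=> hMN [r e]; exists (r * 'X^(N - M)); rewrite e -mulrA -exprD subnK //.
Qed.

Definition ode N S H := cong N.+1 ('X * H^`()) (- (S * H)).

Lemma ode_mul N s t f g : ode N s f -> ode N t g -> ode N (s + t) (f * g).
Proof.
move=> [r1 e1] [r2 e2]; exists (r1 * g + f * r2).
rewrite derivM.
have -> : 'X * (f^`() * g + f * g^`()) = ('X * f^`()) * g + f * ('X * g^`()) by ring.
move: e1 e2; set a := 'X * f^`(); set b := 'X * g^`() => e1 e2.
have -> : a = r1 * 'X^(N.+1) - s * f by rewrite -e1; ring.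
have -> : b = r2 * 'X^(N.+1) - t * g by rewrite -e2; ring.
ring.
Qed.

Lemma ode_prod N m (s f : nat -> {poly C}) :
  (forall k, (k < m)%N -> ode N (s k) (f k)) ->
  ode N (\sum_(k < m) s k) (\prod_(k < m) f k).
Proof.
elim: m => [|m IH] h.
  by rewrite !big_ord0; exists 0; rewrite derivC mulr0 mul0r oppr0 subr0 mul0r.
rewrite !big_ord_recr /=; apply: ode_mul; last exact: h.
by apply: IH => k hk; apply: h; apply: ltnW.
Qed.

Lemma ode_rec N S H i : ode N S H -> (i <= N)%N ->
  i%:R * H`_i = - \sum_(l < i.+1) S`_l * H`_(i - l).
Proof.
move=> hode hi; have := @cong_coef _ _ _ i hode hi.
rewrite coefXM coefN coefM; case: i hi => [|i] hi /=.
  by move=> <-; rewrite mul0r.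
by rewrite coef_deriv -mulr_natl => <-; rewrite mulr1 mulr_natl.
Qed.

Lemma ode_uniq N S1 S2 H1 H2 : ode N S1 H1 -> ode N S2 H2 ->
  S1`_0 = 0 -> S2`_0 = 0 -> (forall l, (l <= N)%N -> S1`_l = S2`_l) ->
  H1`_0 = H2`_0 -> forall i, (i <= N)%N -> H1`_i = H2`_i.
Proof.
move=> o1 o2 s10 s20 hS h0 i.
elim: i {-2}i (leqnn i) => [|i IH] j hj hjN.
  by move: hj; rewrite leqn0 => /eqP ->.
case: (ltnP j i.+1) => hji; first by apply: IH.
have ej : j = i.+1 by apply/eqP; rewrite eqn_leq hj hji.
subst j.
have r1 := ode_rec o1 hjN; have r2 := ode_rec o2 hjN.
have nz : (i.+1)%:R != 0 :> C by rewrite pnatr_eq0.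
apply: (mulfI nz); rewrite r1 r2; congr (- _).
rewrite big_ord_recl [in RHS]big_ord_recl s10 s20 !mul0r !add0r.
apply: eq_bigr => l _; have hl := ltn_ord l; rewrite lift0 hS; last lia.
rewrite IH //; lia.
Qed.

Lemma ode_inj N S1 S2 H1 H2 : ode N S1 H1 -> ode N S2 H2 ->
  (forall i, (i <= N)%N -> H1`_i = H2`_i) -> H1`_0 != 0 ->
  (forall l, (l < N)%N -> S1`_l = S2`_l) -> S1`_N = S2`_N.
Proof.
move=> o1 o2 hH h0 hS.
have r1 := ode_rec o1 (leqnn N); have r2 := ode_rec o2 (leqnn N).
rewrite hH // r2 in r1; move/oppr_inj: r1; rewrite !big_ord_recr /= subnn.
rewrite (hH 0%N) //.
have -> : \sum_(i < N) S2`_i * H2`_(N - i) = \sum_(i < N) S1`_i * H1`_(N - i).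
  by apply: eq_bigr => l _; rewrite hS // hH // leq_subr.
move/addrI => e; apply: (mulIf (_ : H2`_0 != 0)); first by rewrite -hH.
by rewrite e.
Qed.
End PS.

Section PS2.
Variable C : numClosedFieldType.

Definition Spoly (m : nat) (c : nat -> C) : {poly C} :=
  \sum_(k < m) (c k.+1)%:P * 'X^(k.+1).

Lemma coef_Spoly m c l : (Spoly m c)`_l = if (0 < l <= m)%N then c l else 0.
Proof.
elim: m => [|m IH] in l *; first by rewrite /Spoly big_ord0 coef0; case: l => //= l; rewrite andbF.
rewrite /Spoly big_ord_recr /= coefD -/(Spoly m c) IH coefCM coefXn.
case: (eqVneq l m.+1) => [->|hne]; first by rewrite ltnn andbF add0r mulr1 leqnn.
rewrite mulr0 addr0; case: l hne => //= l hne.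
move: hne; rewrite eqSS => hne; have -> : (l < m.+1)%N = (l < m)%N by rewrite ltnS ltn_neqAle hne. by [].
Qed.

Definition acoef (z : nat -> C) (k j : nat) : C :=
  (-1) ^+ j / (j`!%:R * (k.+1)%:R ^+ j) * z k.+1 ^+ j.

Definition Efac (N : nat) (z : nat -> C) (k : nat) : {poly C} :=
  \sum_(j < N.+1) (acoef z k j)%:P * 'X^(k.+1 * j).

Lemma acoef_rec z k j :
  acoef z k j.+1 * (k.+1 * j.+1)%:R + z k.+1 * acoef z k j = 0.
Proof.
rewrite /acoef factS !natrM !exprS.
have h1 : (j`!)%:R != 0 :> C by rewrite pnatr_eq0 -lt0n fact_gt0.
have h2 : (k.+1)%:R != 0 :> C by rewrite pnatr_eq0.
have h3 : (j.+1)%:R != 0 :> C by rewrite pnatr_eq0.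
have h4 : (k.+1)%:R ^+ j != 0 :> C by rewrite expf_neq0.
by field; rewrite (addrC 1 (k%:R : C)) (addrC 1 (j%:R : C)) !natr1 h1 h2 h3 h4.
Qed.

Lemma XderivCX (c : C) e : 'X * (c%:P * 'X^e)^`() = (c * e%:R)%:P * 'X^e.
Proof.
rewrite deriv_mulC derivXn polyCM polyC_natr; case: e => [|e] /=.
  by rewrite !mulr0n !mulr0 mul0r.
by rewrite -mulr_natr exprS; ring.
Qed.

Lemma monoM (a b : C) e f : (a%:P * 'X^e) * (b%:P * 'X^f) = (a * b)%:P * 'X^(e + f).
Proof. by rewrite polyCM exprD; ring. Qed.

Lemma Efac_ode N z k :
  ode N ((z k.+1)%:P * 'X^(k.+1)) (Efac N z k).
Proof.
exists ((z k.+1 * acoef z k N)%:P * 'X^(k * N.+1)).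
rewrite opprK /Efac raddf_sum mulr_sumr.
under eq_bigr do rewrite XderivCX.
rewrite mulr_sumr.
under [X in _ + X = _]eq_bigr do rewrite monoM -mulnS.
rewrite big_ord_recl muln0 mulr0 polyC0 mul0r add0r big_ord_recr /=.
rewrite addrA -big_split /= big1 ?add0r.
  by rewrite -mulrA -exprD addnC -mulSn.
move=> j _; rewrite /bump leq0n add1n -mulrDl -polyCD.
by rewrite (acoef_rec z k j) polyC0 mul0r.
Qed.

Definition Fp (m : nat) (z : nat -> C) : {poly C} := \prod_(k < m) Efac m z k.

Lemma Fp_ode m z : ode m (Spoly m z) (Fp m z).
Proof. exact: (ode_prod (s := fun k => (z k.+1)%:P * 'X^(k.+1)) (f := Efac m z) (fun k _ => Efac_ode m z k)). Qed.

Lemma Fp0 m z : (Fp m z)`_0 = 1.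
Proof.
rewrite /Fp coef0_prod big1 // => k _.
rewrite /Efac coef_sum big_ord_recl big1 /=.
  by rewrite coefCM coefXn muln0 eqxx mulr1 addr0 /acoef !expr0 fact0 !mulr1 invr1 mulr1.
by move=> j _; rewrite coefCM coefXn /bump leq0n add1n mulnS /= mulr0.
Qed.

Lemma Qm_Fp m z : Qm m z = m`!%:R * (Fp m z)`_m.
Proof.
rewrite /Qm /Fp /Efac -mulr_sumr; congr (_ * _).
rewrite bigA_distr_bigA /= coef_sum big_mkcond /=.
apply: eq_bigr => mu _.
have -> : \prod_(i < m) ((acoef z i (mu i))%:P * 'X^(i.+1 * mu i)) =
          (\prod_(i < m) acoef z i (mu i))%:P * 'X^(\sum_(i < m) i.+1 * mu i).
  elim/big_rec3: _ => [|i p q r _ ->]; first by rewrite mulr1.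
  by rewrite monoM.
rewrite coefCM coefXn eq_sym; case: eqP => _; rewrite ?mulr1 ?mulr0 //.
Qed.

Lemma Gfac_ode N (x : C) : ode N (Spoly N (fun l => x ^+ l)) (1 - x%:P * 'X).
Proof.
exists (- (x ^+ N.+1)%:P).
have tele : forall M, Spoly M (fun l => x ^+ l) * (1 - x%:P * 'X) =
     x%:P * 'X - (x ^+ M.+1)%:P * 'X^(M.+1).
  elim => [|M IH]; first by rewrite /Spoly big_ord0 mul0r expr1 subrr.
  rewrite /Spoly big_ord_recr /= -/(Spoly M _) mulrDl IH.
  rewrite !exprS !polyCM; ring.
rewrite opprK derivD derivN derivC deriv_mulC derivX tele; ring.
Qed.

Definition Gp n (x : 'I_n -> C) : {poly C} := \prod_(j < n) (1 - (x j)%:P * 'X).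

Lemma Gp_ode N n x : ode N (\sum_(j < n) Spoly N (fun l => x j ^+ l)) (Gp x).
Proof.
rewrite /Gp.
elim: n x => [|n IH] x.
  by rewrite !big_ord0; exists 0; rewrite derivC mulr0 mul0r oppr0 subr0 mul0r.
rewrite !big_ord_recr /=; apply: ode_mul; last exact: Gfac_ode.
exact: (IH (fun j => x (widen_ord (leqnSn n) j))).
Qed.

Lemma Gp0 n x : (@Gp n x)`_0 = 1.
Proof.
rewrite /Gp coef0_prod big1 // => j _.
by rewrite coefB coef1 coefCM coefX mulr0 subr0.
Qed.
End PS2.

Section PS3.
Variable C : numClosedFieldType.

Lemma Gp_big n (x : 'I_n -> C) i : (n < i)%N -> (Gp x)`_i = 0.
Proof.
rewrite /Gp; elim: n x i => [|n IH] x i hi.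
  by rewrite big_ord0 coef1; case: i hi.
rewrite big_ord_recr /=.
have -> : forall p : {poly C}, p * (1 - (x ord_max)%:P * 'X) = p - (x ord_max)%:P * (p * 'X)
  by move=> p; ring.
rewrite coefB coefCM coefMX; case: i hi => //= i hi.
rewrite (IH (fun j => x (widen_ord (leqnSn n) j))) ?IH ?mulr0 ?subr0 //; lia.
Qed.

Lemma rev_coef n (x : 'I_n -> C) i :
  (\prod_(j < n) ('X - (x j)%:P))`_i = if (i <= n)%N then (Gp x)`_(n - i) else 0.
Proof.
rewrite /Gp; elim: n x i => [|n IH] x i.
  by rewrite !big_ord0 !coef1; case: i.
rewrite !big_ord_recr /=.
have -> : forall p : {poly C}, p * ('X - (x ord_max)%:P) = p * 'X - (x ord_max)%:P * p
  by move=> p; ring.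
have -> : forall p : {poly C}, p * (1 - (x ord_max)%:P * 'X) = p - (x ord_max)%:P * (p * 'X)
  by move=> p; ring.
pose y := fun j : 'I_n => x (widen_ord (leqnSn n) j).
have IH' := IH y; have GB := @Gp_big n y; rewrite /Gp /y /= in GB IH'.
rewrite !coefB !coefCM !coefMX !IH'.
case: i => [|i] /=.
  by rewrite subn0 (GB n.+1) // !mulr0.
rewrite ltnS subSS.
case: (ltngtP i n) => h.
- have -> : (n - i = (n - i.+1).+1)%N by lia.
  by [].
- by rewrite /= mulr0 subr0.
- by rewrite h subnn /= mulr0 subr0.
Qed.

Lemma Ppoly_coef n (z : nat -> C) i :
  (Ppoly n z)`_i = if (i <= n)%N then n`!%:R * (Fp (n - i) z)`_(n - i) else 0.
Proof.
rewrite /Ppoly coef_sum.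
under eq_bigr do rewrite coefZ coefXn.
case: ifP => hi.
  have hm : (n - i < n.+1)%N by lia.
  rewrite (bigD1 (Ordinal hm)) //= big1 ?addr0.
    rewrite subKn // eqxx mulr1 Qm_Fp mulrA mulfVK //.
    by rewrite pnatr_eq0 -lt0n fact_gt0.
  move=> m hne; have hmn := ltn_ord m.
  case: eqP => e; rewrite ?mulr0 //.
  by exfalso; move/eqP: hne; apply; apply/val_inj => /=; lia.
rewrite big1 // => m _; have hmn := ltn_ord m.
case: eqP => e; rewrite ?mulr0 //; lia.
Qed.
End PS3.

Section PS4.
Variable C : numClosedFieldType.

Lemma foldr_diag n (y : C) (x : 'I_n -> C) (i : bits n) (s : seq 'I_n) :
  foldr (@mulmx C n n n) 1%:M [seq Amat y x (i l) | l <- s] =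
  diag_mx (\row_j \prod_(l <- s) (if i l then x j else y)).
Proof.
elim: s => [|a s IH] /=.
  rewrite -diag_const_mx; congr diag_mx; apply/rowP => j; rewrite !mxE big_nil //.
rewrite IH.
have -> : Amat y x (i a) = diag_mx (\row_j (if i a then x j else y)).
  rewrite /Amat; case: (i a).
    by congr diag_mx; apply/rowP => j; rewrite !mxE.
  by rewrite -diag_const_mx; congr diag_mx; apply/rowP => j; rewrite !mxE.
rewrite mulmx_diag; congr diag_mx; apply/rowP => j; rewrite !mxE big_cons //.
Qed.

Lemma weight_le n (i : bits n) : (weight i <= n)%N.
Proof. by have := max_card [set l | i l]; rewrite card_ord. Qed.

Lemma mps_eval n (y : C) (x : 'I_n -> C) (i : bits n) :
  @mps_coef C n n (@Amat C n y x) i = y ^+ (n - weight i) * \sum_(j < n) x j ^+ weight i.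
Proof.
rewrite /mps_coef foldr_diag mxtrace_diag mulr_sumr; apply: eq_bigr => j _.
rewrite mxE big_enum /= (bigID (fun l => i l)) /=.
rewrite (eq_bigr (fun _ => x j)); last by move=> l ->.
rewrite [X in _ * X](eq_bigr (fun _ => y)); last by move=> l /negPf ->.
rewrite (prodr_const [pred l | i l]) (prodr_const [pred l | ~~ i l]).
have hw : weight i = #|[pred l | i l]| by rewrite /weight; apply: eq_card => l; rewrite !inE.
have hc := cardC [pred l | i l]; rewrite card_ord in hc.
have hc' : #|[pred l | ~~ i l]| = (n - weight i)%N.
  have e : #|[predC [pred l | i l]]| = #|[pred l | ~~ i l]| by apply: eq_card => l; rewrite !inE.
  rewrite -e hw; move: (#|[pred l | i l]|) (#|[predC [pred l | i l]]|) hc => a b; lia.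
by rewrite hc' hw mulrC.
Qed.

Lemma dicke_eval n (d : nat -> C) (i : bits n) :
  @dicke_sum C n d i = d (weight i) / sqrtC ('C(n, weight i))%:R.
Proof.
have hw : (weight i < n.+1)%N by rewrite ltnS weight_le.
rewrite /dicke_sum (bigD1 (Ordinal hw)) //= big1 ?addr0.
  by rewrite /dicke eqxx.
move=> k hk; rewrite /dicke; case: eqP => e; rewrite ?mulr0 //.
by exfalso; move/eqP: hk; apply; apply/val_inj.
Qed.

Lemma weight_ex n k : (k <= n)%N -> exists i : bits n, weight i = k.
Proof.
move=> hk; exists [ffun l : 'I_n => (l < k)%N].
rewrite /weight -sum1_card.
transitivity (\sum_(l < n | (l < k)%N) 1)%N.
  by apply: eq_bigl => l; rewrite !inE ffunE.
by rewrite -(big_ord_widen n (fun _ => 1%N) hk) sum1_card card_ord.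
Qed.
End PS4.

Section PS5.
Variable C : numClosedFieldType.

Lemma coef_SG N n (x : 'I_n -> C) l :
  (\sum_(j < n) Spoly N (fun l => x j ^+ l))`_l =
  if (0 < l <= N)%N then \sum_(j < n) x j ^+ l else 0.
Proof.
rewrite coef_sum; under eq_bigr do rewrite coef_Spoly.
by case: ifP => // _; rewrite big1.
Qed.

Lemma S_agree M n (x : 'I_n -> C) (z : nat -> C) l :
  (forall k, (0 < k)%N -> (k <= l)%N -> \sum_(j < n) x j ^+ k = z k) ->
  (Spoly M z)`_l = (\sum_(j < n) Spoly M (fun l => x j ^+ l))`_l.
Proof.
move=> h; rewrite coef_Spoly coef_SG; case: ifP => // /andP [h1 h2].
by rewrite h.
Qed.

Lemma core n (x : 'I_n -> C) (z : nat -> C) :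
  (forall k, (1 <= k <= n)%N -> \sum_(j < n) x j ^+ k = z k) <->
  (forall m, (m <= n)%N -> (Fp m z)`_m = (Gp x)`_m).
Proof.
split.
  move=> h m hm.
  apply: (ode_uniq (Fp_ode m z) (Gp_ode m x)) => //.
  - by rewrite coef_Spoly.
  - by rewrite coef_SG.
  - move=> l hl; apply: S_agree => k hk hkl; apply: h; lia.
  - by rewrite Fp0 Gp0.
move=> h k; elim/ltn_ind: k => k IH /andP [hk1 hkn].
have agree : forall l, (l < k)%N ->
    (Spoly k z)`_l = (\sum_(j < n) Spoly k (fun l => x j ^+ l))`_l.
  move=> l hl; apply: S_agree => k' hk' hkl; apply: IH; lia.
have := ode_inj (Fp_ode k z) (Gp_ode k x).
rewrite coef_Spoly coef_SG hk1 leqnn /= => -> //.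
- move=> i hi; case: (ltngtP i k) => hik; last by rewrite hik h.
  + apply: (ode_uniq (N := i) (cong_weaken _ (Fp_ode k z)) (cong_weaken _ (Gp_ode k x))) => //.
    * by rewrite coef_Spoly.
    * by rewrite coef_SG.
    * by move=> l hl; apply: agree; lia.
    * by rewrite Fp0 Gp0.
  + lia.
- by rewrite Fp0 oner_neq0.
Qed.

Lemma ppoly_part n (x : 'I_n -> C) (z : nat -> C) :
  (forall m, (m <= n)%N -> (Fp m z)`_m = (Gp x)`_m) <->
  Ppoly n z = lead_coef (Ppoly n z) *: \prod_(j < n) ('X - (x j)%:P).
Proof.
have nz : n`!%:R != 0 :> C by rewrite pnatr_eq0 -lt0n fact_gt0.
split.
  move=> h.
  have e : Ppoly n z = n`!%:R *: \prod_(j < n) ('X - (x j)%:P).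
    apply/polyP => i; rewrite Ppoly_coef coefZ rev_coef.
    case: ifP => hi; last by rewrite mulr0.
    by rewrite h // leq_subr.
  have mon : \prod_(j < n) ('X - (x j)%:P) \is monic by apply: monic_prod_XsubC.
  by rewrite {2}e lead_coefZ (monicP mon) mulr1.
move=> e m hm.
have cn := congr1 (fun p : {poly C} => p`_n) e; simpl in cn.
rewrite Ppoly_coef coefZ rev_coef leqnn subnn Fp0 Gp0 !mulr1 in cn.
have cm := congr1 (fun p : {poly C} => p`_(n - m)) e; simpl in cm.
rewrite Ppoly_coef coefZ rev_coef leq_subr subKn // -cn in cm.
exact: (mulfI nz).
Qed.
End PS5.

Lemma divswap (C : numClosedFieldType) (a b d p : C) : a != 0 -> b != 0 ->
  (d / b = a * p <-> p = d / (a * b)).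
Proof.
move=> ha hb; split => [e|->]; last by field; rewrite ha hb.
by rewrite -[d](divfK hb) e; field; rewrite ha hb.
Qed.

Lemma part1 (C : numClosedFieldType) (n : nat) (d : nat -> C)
  (hn : (1 <= n)%N) (hd0 : d 0%N != 0) (y : C) (x : 'I_n -> C) :
     (forall i : bits n, @dicke_sum C n d i = @mps_coef C n n (@Amat C n y x) i) <->
     (y ^+ n = d 0%N / n%:R /\
      forall k : nat, (1 <= k <= n)%N ->
        \sum_(j < n) x j ^+ k = d k / (y ^+ (n - k) * sqrtC ('C(n, k))%:R)).
Proof.
have snz : forall k, (k <= n)%N -> sqrtC ('C(n, k))%:R != 0 :> C.
  by move=> k hk; rewrite sqrtC_eq0 pnatr_eq0 -lt0n bin_gt0.
have nnz : n%:R != 0 :> C by rewrite pnatr_eq0 -lt0n.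
have pw0 : \sum_(j < n) x j ^+ 0 = n%:R.
  by under eq_bigr do rewrite expr0; rewrite sumr_const card_ord.
have key : (forall i : bits n, @dicke_sum C n d i = @mps_coef C n n (@Amat C n y x) i) <->
   (forall k, (k <= n)%N -> d k / sqrtC ('C(n, k))%:R = y ^+ (n - k) * \sum_(j < n) x j ^+ k).
  split.
    move=> h k hk; have [i <-] := weight_ex hk.
    by rewrite -dicke_eval -mps_eval.
  by move=> h i; rewrite dicke_eval mps_eval h // weight_le.
rewrite key; clear key.
have ynz : y ^+ n = d 0%N / n%:R -> forall k, y ^+ (n - k) != 0.
  move=> e k; rewrite expf_neq0 //; apply/negP => /eqP y0.
  move: e; rewrite y0 expr0n eqn0Ngt hn /= => /esym /eqP.
  by rewrite mulf_eq0 invr_eq0 (negPf nnz) (negPf hd0).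
split.
  move=> h.
  have e0 : y ^+ n = d 0%N / n%:R.
    have := h 0%N (leq0n _); rewrite bin0 sqrtC1 divr1 subn0 pw0 => ->.
    by field.
  split => // k /andP [hk1 hkn].
  by apply/divswap; [exact: ynz | exact: snz | exact: h].
move=> [e0 h] k hk.
case: k hk => [|k] hk.
  by rewrite bin0 sqrtC1 divr1 subn0 pw0 e0; field.
by apply/divswap; [exact: ynz | exact: snz | apply: h].
Qed.

Unset Implicit Arguments.
Theorem lemma3 (C : numClosedFieldType) (n : nat) (d : nat -> C)
  (hn : (1 <= n)%N) (hd0 : d 0%N != 0) :
  (forall (y : C) (x : 'I_n -> C),
     (forall i : bits n, @dicke_sum C n d i = @mps_coef C n n (@Amat C n y x) i) <->
     (y ^+ n = d 0%N / n%:R /\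
      forall k : nat, (1 <= k <= n)%N ->
        \sum_(j < n) x j ^+ k = d k / (y ^+ (n - k) * sqrtC ('C(n, k))%:R)))
  /\
  (forall y : C, y ^+ n = d 0%N / n%:R ->
     forall x : 'I_n -> C,
       (forall i : bits n, @dicke_sum C n d i = @mps_coef C n n (@Amat C n y x) i) <->
       @Ppoly C n (@zcoef C n d y) =
         lead_coef (@Ppoly C n (@zcoef C n d y)) *: \prod_(j < n) ('X - (x j)%:P)).
Proof.
split; first exact: part1.
move=> y e0 x.
rewrite part1 // -ppoly_part -core.
split; first by case.
by move=> h; split.
Qed.
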